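(* Let $\lambda,\mu,\rho$ be partitions of $n$ with $I,J,K$ parts respectively, and let $P$ be the swap Markov chain on $\mathcal{T}_{\lambda,\mu,\rho}$ defined in the context. Then $P$ is connected (irreducible) on $\mathcal{T}_{\lambda,\mu,\rho}$ and reversible with respect to \[ \pi_{\lambda,\mu,\rho}(T)=\frac1{n!}\prod_{i,j,k}\frac{\lambda_i!\,\mu_j!\,\rho_k!}{T_{ijk}!}. \]
   Context: $\mathcal{T}_{\lambda,\mu,\rho}$ is the set of arrays $T=(T_{ijk})_{1\le i\le I,1\le j\le J,1\le k\le K}$ of nonnegative integers with $\sum_{j,k}T_{ijk}=\lambda_i$, $\sum_{i,k}T_{ijk}=\mu_j$, $\sum_{i,j}T_{ijk}=\rho_k$ for all $i,j,k$. Represent $T$ as a multiset of $n$ triples $(i,j,k)$, with $T_{ijk}$ copies of $(i,j,k)$. One step of the chain: choose two of the $n$ triples independently and uniformly at random (possibly the same one), choose $r\in\{1,2,3\}$ uniformly, and swap the $r$-th coordinates of the two chosen triples; e.g. for $r=1$, $(i_1,j_1,k_1),(i_2,j_2,k_2)\mapsto(i_2,j_1,k_1),(i_1,j_2,k_2)$. Thus the move that removes one copy each of $(i_1,j_1,k_1)$ and $(i_2,j_2,k_2)$ and adds the swapped triples is made with probability $\frac13\cdot\frac{2T_{i_1j_1k_1}T_{i_2j_2k_2}}{n^2}$. Reversibility means $\pi(T)P(T,T')=\pi(T')P(T',T)$ for all $T,T'$. *)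

(* Defs.v *)
From HB Require Import structures.
From mathcomp Require Import all_boot all_order all_algebra.
Set Implicit Arguments. Unset Strict Implicit. Unset Printing Implicit Defensive.
Import Order.TTheory GRing.Theory Num.Theory.
Local Open Scope ring_scope.

Definition is_int_partition (n : nat) (l : seq nat) : bool :=
  [&& sorted geq l, all (fun x => (0 < x)%N) l & sumn l == n].

Definition triple (I J K : nat) := ('I_I * 'I_J * 'I_K)%type.

Definition array3 (I J K : nat) := {ffun triple I J K -> nat}.

Definition in_Tspace (I J K : nat) (lam mu rho : seq nat) (T : array3 I J K) : bool :=
  [&& [forall i : 'I_I, \sum_(j < J) \sum_(k < K) T (i, j, k) == nth 0 lam i],
      [forall j : 'I_J, \sum_(i < I) \sum_(k < K) T (i, j, k) == nth 0 mu j] &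
      [forall k : 'I_K, \sum_(i < I) \sum_(j < J) T (i, j, k) == nth 0 rho k]].

(* swap the r-th coordinate (r = 0,1,2 for coordinates 1,2,3) of two triples *)
Definition swap_coord (I J K : nat) (r : 'I_3) (x y : triple I J K)
  : triple I J K * triple I J K :=
  let: (i1, j1, k1) := x in
  let: (i2, j2, k2) := y in
  match val r with
  | 0 => ((i2, j1, k1), (i1, j2, k2))
  | 1 => ((i1, j2, k1), (i2, j1, k2))
  | _ => ((i1, j1, k2), (i2, j2, k1))
  end.

(* the multiset after removing one copy of x and of y and adding the swapped
   triples (computed in int to be exact also when x = y) *)
Definition swap_result (I J K : nat) (T : array3 I J K) (r : 'I_3)
  (x y : triple I J K) (z : triple I J K) : int :=
  let s := swap_coord r x y in
  (T z)%:Z + (z == s.1)%:Z + (z == s.2)%:Z - (z == x)%:Z - (z == y)%:Z.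

(* One-step transition probability P(T,T') of the swap chain: two of the n
   triples are chosen independently and uniformly (ordered, possibly the same
   one): there are T_x * T_y ordered choices of positions giving types (x,y);
   r in {1,2,3} is uniform. *)
Definition swapP (n I J K : nat) (T T' : array3 I J K) : rat :=
  (3 * (n%:R) ^+ 2)^-1 *
  \sum_(x : triple I J K) \sum_(y : triple I J K) \sum_(r < 3)
     if [forall z, (T' z)%:Z == swap_result T r x y z]
     then ((T x * T y)%N)%:R else 0.

Definition piT (n I J K : nat) (lam mu rho : seq nat) (T : array3 I J K) : rat :=
  ((\prod_(i < I) (nth 0 lam i)`!) * (\prod_(j < J) (nth 0 mu j)`!)
     * (\prod_(k < K) (nth 0 rho k)`!))%:R /
  ((n`! * \prod_(x : triple I J K) (T x)`!)%N)%:R.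

(* Main.v *)
Require Import Defs.
From HB Require Import structures.
From mathcomp Require Import all_boot all_order all_algebra.
From mathcomp Require Import zify ring.
Import Order.TTheory GRing.Theory Num.Theory.
Local Open Scope ring_scope.

Module Helpers.
Set Implicit Arguments. Unset Strict Implicit. Unset Printing Implicit Defensive.

Lemma swap_invol I J K r (x y : triple I J K) :
  swap_coord r (swap_coord r x y).1 (swap_coord r x y).2 = (x, y).
Proof.
case: x => [[i1 j1] k1]; case: y => [[i2 j2] k2].
by case: r => [[|[|r]] Hr].
Qed.

Lemma swap_same I J K r (x : triple I J K) : swap_coord r x x = (x, x).
Proof. case: x => [[i1 j1] k1]; by case: r => [[|[|r]] Hr]. Qed.

Definition cond I J K (T T' : array3 I J K) (r : 'I_3) (x y : triple I J K) :=
  [forall z, (T' z)%:Z == swap_result T r x y z].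

Lemma cond_sym I J K (T T' : array3 I J K) r x y :
  cond T T' r x y =
  cond T' T r (swap_coord r x y).1 (swap_coord r x y).2.
Proof.
rewrite /cond /swap_result swap_invol /=; apply: eq_forallb => z /=.
by apply/eqP/eqP => ->; ring.
Qed.

Definition hW I J K (W : triple I J K -> int) : rat :=
  if [forall z, 0 <= W z] then (((\prod_z (absz (W z))`!)%N)%:R)^-1 else 0.

Lemma hW_ext I J K (W1 W2 : triple I J K -> int) : W1 =1 W2 -> hW W1 = hW W2.
Proof.
move=> E; rewrite /hW (eq_forallb (fun z => congr1 _ (E z))).
by under eq_bigr => z _ do rewrite E.
Qed.

Lemma Wnat I J K (V : array3 I J K) (x y z : triple I J K) : x != y -> (0 < V x)%N -> (0 < V y)%N ->
  (V z)%:Z - (z == x)%:Z - (z == y)%:Z = ((V z - (z == x) - (z == y))%N)%:Z.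
Proof.
move=> nxy Hx Hy.
case: (eqVneq z x) => [->|nzx]; first by rewrite (negbTE nxy) /=; lia.
case: (eqVneq z y) => [->|nzy] /=; lia.
Qed.

Lemma prod_fact I J K (V : array3 I J K) (x y : triple I J K) : x != y -> (0 < V x)%N -> (0 < V y)%N ->
  (\prod_z (V z)`! = V x * V y * \prod_z (V z - (z == x) - (z == y))`!)%N.
Proof.
move=> nxy Hx Hy.
rewrite (bigD1 x) // (bigD1 y) /=; last by rewrite eq_sym.
rewrite [X in (_ = _ * X)%N](bigD1 x) // [X in (_ = _ * (_ * X))%N](bigD1 y) /=;
  last by rewrite eq_sym.
rewrite eqxx (negbTE nxy) eq_sym (negbTE nxy) eqxx.
have -> : \prod_(i | (i != x) && (i != y)) (V i - (i == x) - (i == y))`! =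
          \prod_(i | (i != x) && (i != y)) (V i)`!.
  by apply: eq_bigr => i /andP [/negbTE -> /negbTE ->]; rewrite !subn0.
case: (V x) Hx => // a _; case: (V y) Hy => // b _.
rewrite !factS /= !subn0 !subn1 /=; ring.
Qed.

Lemma key I J K (V : array3 I J K) (x y : triple I J K) : x != y ->
  ((V x * V y)%N)%:R / ((\prod_z (V z)`!)%N)%:R =
  hW (fun z => (V z)%:Z - (z == x)%:Z - (z == y)%:Z).
Proof.
move=> nxy.
case: (posnP (V x)) => Hx.
  rewrite Hx mul0n mul0r /hW; case: ifP => // /forallP /(_ x).
  by rewrite Hx eqxx (negbTE nxy).
case: (posnP (V y)) => Hy.
  rewrite Hy muln0 mul0r /hW; case: ifP => // /forallP /(_ y).
  by rewrite Hy eqxx eq_sym (negbTE nxy).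
rewrite /hW.
have -> : [forall z, 0 <= (V z)%:Z - (z == x)%:Z - (z == y)%:Z].
  apply/forallP => z; have E:= (Wnat z nxy Hx Hy).
  exact: (eq_ind_r (fun t : int => 0 <= t) (le0z_nat _) E).
rewrite [in RHS](eq_bigr (fun z => (V z - (z == x) - (z == y))`!)%N); last first.
  move=> z _; have E := Wnat z nxy Hx Hy.
  exact: (congr1 (fun t => (absz t)`!)%N E).
rewrite (prod_fact nxy Hx Hy) (natrM _ (V x * V y)) invfM mulrA mulfV ?mul1r //.
by rewrite pnatr_eq0 -lt0n muln_gt0 Hx Hy.
Qed.

Lemma piT_split n I J K lam mu rho (V : array3 I J K) (a b : triple I J K) :
  piT n lam mu rho V * ((V a * V b)%N)%:R =
  (((\prod_(i < I) (nth 0 lam i)`!) * (\prod_(j < J) (nth 0 mu j)`!)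
     * (\prod_(k < K) (nth 0 rho k)`!))%N%:R / (n`!)%:R) *
  (((V a * V b)%N)%:R / ((\prod_z (V z)`!)%N)%:R).
Proof.
rewrite /piT (natrM _ (n`!)) invfM.
set A := (_ * _ * _)%N. set B := (V a * V b)%N.
ring.
Qed.

Lemma rev_term n I J K lam mu rho (T T' : array3 I J K) r (x y : triple I J K) :
  T != T' ->
  piT n lam mu rho T * (if cond T T' r x y then ((T x * T y)%N)%:R else 0) =
  piT n lam mu rho T' *
   (if cond T' T r (swap_coord r x y).1 (swap_coord r x y).2
    then ((T' (swap_coord r x y).1 * T' (swap_coord r x y).2)%N)%:R else 0).
Proof.
move=> neq; rewrite -cond_sym.
case C: (cond T T' r x y); last by rewrite !mulr0.
have nxy : x != y.
  apply: contraNneq neq => exy; move: C.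
  rewrite exy /cond /swap_result swap_same /= => /forallP H.
  apply/eqP/ffunP => z; have /eqP E := H z.
  have : (T z)%:Z = (T' z)%:Z by rewrite E; ring.
  by case.
set p := swap_coord r x y.
have nxy' : p.1 != p.2.
  apply: contraNneq nxy => e.
  have := swap_invol r x y; rewrite -/p e swap_same.
  by case=> <- <-.
rewrite !piT_split !key //; congr (_ * _); apply: hW_ext => z.
move/forallP: C => /(_ z) /eqP; rewrite /swap_result /= -/p => ->; ring.
Qed.

Lemma rev_all n I J K lam mu rho (T T' : array3 I J K) :
  piT n lam mu rho T * swapP n T T' = piT n lam mu rho T' * swapP n T' T.
Proof.
case: (eqVneq T T') => [->//|neq].
rewrite /swapP mulrCA [RHS]mulrCA; congr (_ * _).
rewrite !pair_big /= !mulr_sumr.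
have hK : cancel (fun p : triple I J K * triple I J K * 'I_3 =>
                   (swap_coord p.2 p.1.1 p.1.2, p.2))
                 (fun p => (swap_coord p.2 p.1.1 p.1.2, p.2)).
  by case=> [[a b] r]; rewrite /= swap_invol.
rewrite [RHS](reindex_inj (can_inj hK)) /=.
apply: eq_bigr => [[[x y] r]] _ /=.
exact: rev_term.
Qed.

Definition Step I J K (A B : array3 I J K) : bool :=
  [exists x, exists y, exists r, [&& (0 < A x)%N, (0 < A y)%N & cond A B r x y]].

Definition Reach I J K (A B : array3 I J K) :=
  exists p, path (@Step I J K) A p /\ last A p = B.

Definition tab I J K (s : seq (triple I J K)) : array3 I J K :=
  [ffun z => count_mem z s].

Definition crd I J K (r : 'I_3) (x : triple I J K) : nat :=
  match val r with 0 => val x.1.1 | 1 => val x.1.2 | _ => val x.2 end.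

Lemma sum_pos (X : finType) (F : X -> rat) i0 :
  (forall i, 0 <= F i) -> 0 < F i0 -> 0 < \sum_i F i.
Proof.
move=> H0 H1; rewrite (bigD1 i0) //=; apply: ltr_wpDr => //.
exact: sumr_ge0.
Qed.

Lemma step_pos n I J K (A B : array3 I J K) :
  (0 < n)%N -> Step A B -> 0 < swapP n A B.
Proof.
move=> n0 /existsP [x /existsP [y /existsP [r /and3P [Hx Hy C]]]].
rewrite /swapP mulr_gt0 //; first by rewrite invr_gt0 mulr_gt0 // exprn_gt0 // ltr0n.
have nn (b : bool) k : 0 <= (if b then k%:R else 0 : rat) by case: b.
rewrite (bigD1 x) //= (bigD1 y) //= (bigD1 r) //=.
rewrite /cond in C; rewrite C.
apply: ltr_wpDr; first by apply: sumr_ge0 => ? _; do 2! (apply: sumr_ge0 => ? _).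
apply: ltr_wpDr; first by apply: sumr_ge0 => ? _; apply: sumr_ge0 => ? _.
apply: ltr_wpDr; first by apply: sumr_ge0 => ? _.
by rewrite ltr0n muln_gt0 Hx Hy.
Qed.

Lemma Reach_refl I J K (A : array3 I J K) : Reach A A.
Proof. by exists [::]. Qed.

Lemma Reach_trans I J K (A B C : array3 I J K) : Reach A B -> Reach B C -> Reach A C.
Proof.
move=> [p [Hp Lp]] [q [Hq Lq]]; exists (p ++ q).
by rewrite cat_path last_cat Lp Hp Hq.
Qed.

Lemma Reach_step I J K (A B : array3 I J K) : Step A B -> Reach A B.
Proof. by move=> H; exists [:: B]; rewrite /= H. Qed.

Lemma tab_perm I J K (s t : seq (triple I J K)) : perm_eq s t -> tab s = tab t.
Proof. by move=> /permP H; apply/ffunP => z; rewrite !ffunE H. Qed.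

Lemma step_tab I J K r (w s : seq (triple I J K)) u v :
  Step (tab (w ++ u :: v :: s))
       (tab (w ++ (swap_coord r u v).1 :: (swap_coord r u v).2 :: s)).
Proof.
apply/existsP; exists u; apply/existsP; exists v; apply/existsP; exists r.
rewrite !ffunE !count_cat /= !eqxx /=; apply/and3P; split; try lia.
apply/forallP => z; rewrite /swap_result /= !ffunE !count_cat /=.
rewrite [u == z]eq_sym [v == z]eq_sym [(swap_coord r u v).1 == z]eq_sym
  [(swap_coord r u v).2 == z]eq_sym.
apply/eqP; rewrite !PoszD; ring.
Qed.

Lemma swap_crd1 I J K r (u v : triple I J K) : crd r (swap_coord r u v).1 = crd r v.
Proof.
case: u => [[i1 j1] k1]; case: v => [[i2 j2] k2].
by case: r => [[|[|[|m]]] Hr].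
Qed.

Lemma swap_crd2 I J K r (u v : triple I J K) : crd r (swap_coord r u v).2 = crd r u.
Proof.
case: u => [[i1 j1] k1]; case: v => [[i2 j2] k2].
by case: r => [[|[|[|m]]] Hr].
Qed.

Lemma swap_crd_other I J K r r' (u v : triple I J K) : r' != r ->
  crd r' (swap_coord r u v).1 = crd r' u /\ crd r' (swap_coord r u v).2 = crd r' v.
Proof.
case: u => [[i1 j1] k1]; case: v => [[i2 j2] k2].
by case: r => [[|[|[|m]]] Hr] //; case: r' => [[|[|[|m']]] Hr'] //.
Qed.

Definition o0 : 'I_3 := @Ordinal 3 0 isT.
Definition o1 : 'I_3 := @Ordinal 3 1 isT.
Definition o2 : 'I_3 := @Ordinal 3 2 isT.

Lemma crd_inj I J K (x y : triple I J K) :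
  crd o0 x = crd o0 y -> crd o1 x = crd o1 y -> crd o2 x = crd o2 y -> x = y.
Proof.
case: x => [[i1 j1] k1]; case: y => [[i2 j2] k2] /= e1 e2 e3.
rewrite /crd /= in e1 e2 e3.
by move: e1 e2 e3 => /val_inj -> /val_inj -> /val_inj ->.
Qed.

Lemma fix_coord I J K r (w r1 : seq (triple I J K)) u (m : nat) :
  m \in map (crd r) (u :: r1) ->
  exists u' r2, [/\ Reach (tab (w ++ u :: r1)) (tab (w ++ u' :: r2)),
     crd r u' = m, (forall r', r' != r -> crd r' u' = crd r' u) &
     (forall r'', perm_eq (map (crd r'') (u :: r1)) (map (crd r'') (u' :: r2)))].
Proof.
case: (eqVneq (crd r u) m) => [e|ne] Hm.
  by exists u, r1; split => //; try exact: Reach_refl; move=> ?; exact: perm_refl.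
move: Hm; rewrite /= inE eq_sym (negbTE ne) /= => /mapP [v vin ev].
have P := perm_to_rem vin.
exists (swap_coord r u v).1, ((swap_coord r u v).2 :: rem v r1); split.
- rewrite (@tab_perm _ _ _ (w ++ u :: r1) (w ++ u :: v :: rem v r1)).
    apply: Reach_step; exact: step_tab.
  by rewrite perm_cat2l perm_cons.
- by rewrite swap_crd1 ev.
- by move=> r' /(swap_crd_other u v) [].
- move=> r''; have PP : perm_eq (u :: r1) (u :: v :: rem v r1) by rewrite perm_cons.
  apply: perm_trans; first exact: (perm_map (crd r'') PP). rewrite /=.
  case: (eqVneq r'' r) => [->|ne'].
    by rewrite swap_crd1 swap_crd2; apply/permP => a /=; rewrite addnCA.
  by have [-> ->] := swap_crd_other u v ne'.
Qed.

Lemma conn I J K (t : seq (triple I J K)) : forall s w,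
  (forall r, perm_eq (map (crd r) s) (map (crd r) t)) ->
  Reach (tab (w ++ s)) (tab (w ++ t)).
Proof.
elim: t => [|x t IH] s w H.
  have := perm_size (H o0); rewrite size_map /=; case: s {H} => // _.
  exact: Reach_refl.
case: s H => [|u r1] H; first by have := perm_size (H o0).
have m0 : crd o0 x \in map (crd o0) (u :: r1).
  by rewrite (perm_mem (H o0)) inE eqxx.
have [u1 [r2 [R1 c1 e1 p1]]] := fix_coord w m0.
have m1 : crd o1 x \in map (crd o1) (u1 :: r2).
  by rewrite -(perm_mem (p1 o1)) (perm_mem (H o1)) inE eqxx.
have [u2 [r3 [R2 c2 e2 p2]]] := fix_coord w m1.
have m2 : crd o2 x \in map (crd o2) (u2 :: r3).
  by rewrite -(perm_mem (p2 o2)) -(perm_mem (p1 o2)) (perm_mem (H o2)) inE eqxx.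
have [u3 [r4 [R3 c3 e3 p3]]] := fix_coord w m2.
have ex : u3 = x.
  apply: crd_inj.
  - by rewrite e3 // e2 // c1.
  - by rewrite e3 // c2.
  - by [].
subst u3.
apply: (Reach_trans R1); apply: (Reach_trans R2); apply: (Reach_trans R3).
rewrite -!cat_rcons; apply: IH => r.
have q1 := perm_trans (p1 r) (perm_trans (p2 r) (p3 r)).
have q : perm_eq (map (crd r) (x :: r4)) (map (crd r) (x :: t)).
  by apply: (perm_trans _ (H r)); rewrite perm_sym.
by move: q; rewrite /= perm_cons.
Qed.

Definition enum_seq I J K (T : array3 I J K) : seq (triple I J K) :=
  flatten [seq nseq (T z) z | z <- index_enum (triple I J K)].

Lemma count_enum I J K (T : array3 I J K) (P : pred (triple I J K)) :
  count P (enum_seq T) = (\sum_z P z * T z)%N.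
Proof.
rewrite count_flatten sumnE !big_map; apply: eq_bigr => z _.
by rewrite count_nseq.
Qed.

Lemma tab_enum I J K (T : array3 I J K) : tab (enum_seq T) = T.
Proof.
apply/ffunP => z0; rewrite ffunE count_enum (bigD1 z0) //= eqxx mul1n big1 ?addn0 //.
by move=> z /negbTE ->.
Qed.

Lemma sum3 I J K (F : triple I J K -> nat) :
  (\sum_z F z = \sum_(i < I) \sum_(j < J) \sum_(k < K) F (i, j, k))%N.
Proof.
symmetry; rewrite pair_big /= pair_big /=.
by apply: eq_bigr => [[[i j] k]] _.
Qed.

Lemma mcount I J K (T : array3 I J K) r m :
  count_mem m (map (crd r) (enum_seq T)) = (\sum_z (crd r z == m) * T z)%N.
Proof. by rewrite count_map count_enum. Qed.

Lemma marg_eq I J K lam mu rho (T T' : array3 I J K) r m :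
  in_Tspace lam mu rho T -> in_Tspace lam mu rho T' ->
  count_mem m (map (crd r) (enum_seq T)) = count_mem m (map (crd r) (enum_seq T')).
Proof.
move=> /and3P [/forallP A1 /forallP A2 /forallP A3].
move=> /and3P [/forallP B1 /forallP B2 /forallP B3].
rewrite !mcount !sum3.
case: r => [[|[|[|r]]] Hr] /=.
- apply: eq_bigr => i _.
  under eq_bigr => j _ do rewrite -big_distrr.
  under [RHS]eq_bigr => j _ do rewrite -big_distrr.
  rewrite -!big_distrr /=.
  by rewrite (eqP (A1 i)) (eqP (B1 i)).
- rewrite exchange_big [RHS]exchange_big /=; apply: eq_bigr => j _.
  under eq_bigr => i _ do rewrite -big_distrr.
  under [RHS]eq_bigr => i _ do rewrite -big_distrr.
  rewrite -!big_distrr /=.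
  by rewrite (eqP (A2 j)) (eqP (B2 j)).
- under eq_bigr => i _ do rewrite exchange_big.
  under [RHS]eq_bigr => i _ do rewrite exchange_big.
  rewrite exchange_big [RHS]exchange_big /=; apply: eq_bigr => k _.
  under eq_bigr => i _ do rewrite -big_distrr.
  under [RHS]eq_bigr => i _ do rewrite -big_distrr.
  rewrite -!big_distrr /=.
  by rewrite (eqP (A3 k)) (eqP (B3 k)).
- by [].
Qed.
End Helpers.
Import Helpers.

Theorem theorem5p1 (n I J K : nat) (lam mu rho : seq nat) :
  is_int_partition n lam -> size lam = I ->
  is_int_partition n mu -> size mu = J ->
  is_int_partition n rho -> size rho = K ->
  (* irreducibility: any two states are joined by a path of positive-probability steps *)
  (forall T T' : array3 I J K,
     in_Tspace lam mu rho T -> in_Tspace lam mu rho T' ->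
     exists s : seq (array3 I J K),
       path (fun A B => 0 < swapP n A B) T s /\ last T s = T') /\
  (* reversibility with respect to pi *)
  (forall T T' : array3 I J K,
     in_Tspace lam mu rho T -> in_Tspace lam mu rho T' ->
     piT n lam mu rho T * swapP n T T' = piT n lam mu rho T' * swapP n T' T).
Proof.
move=> Pl Sl Pm Sm Pr Sr; split; last by move=> T T' _ _; exact: rev_all.
move=> T T' HT HT'.
case: (posnP n) => [n0|npos].
  move: Pl; rewrite /is_int_partition => /and3P [_ Hpos /eqP Hsum].
  case: lam Sl Hpos Hsum HT HT' => [|a l] Sl Hpos Hsum HT HT'; last first.
    by move: Hpos => /= /andP [a0 _]; move: Hsum; rewrite /= n0; lia.
  simpl in Sl; subst I.
  exists [::]; split => //; apply/ffunP => [[[i j] k]].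
  by case: i.
have := @conn _ _ _ (enum_seq T') (enum_seq T) [::].
case.
  move=> r; apply/allP => m _; apply/eqP; exact: (marg_eq r m HT HT').
rewrite /= !tab_enum => p [Hp Lp].
exists p; split => //.
by apply: sub_path Hp => A B; exact: step_pos.
Qed.
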